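(* Let $(\Omega,\mathcal F,(\mathcal F_t)_{t\ge0},\mathbb P)$ be a filtered probability space satisfying the usual conditions, $B$ an $(\mathcal F_t)$-adapted $d$-dimensional Brownian motion started at $0$, and let $\mathbf I=\{1,\dots,m\}$, $m\ge1$. For each $i\in\mathbf I$ let $\phi_i:\mathbb R\to(-\infty,+\infty]$ be convex and lower semicontinuous with $\phi_i=+\infty$ on $(-\infty,0)$ and $\phi_i$ of class $C^1$ on $(0,\infty)$; let $n_i$ be pairwise distinct unit vectors of $\mathbb R^d$ and $a_i\in\mathbb R$. Set $\Phi(x)=\sum_{i\in\mathbf I}\phi_i(x\cdot n_i-a_i)$, $D=\{x: x\cdot n_i>a_i\ \forall i\}$, assumed nonempty, so $\overline D=\{x:x\cdot n_i\ge a_i\ \forall i\}$. Let $(X,L)$ be the solution of the multivalued SDE associated with $\Phi$ (see context) with $\mathcal F_0$-measurable initial condition $X_0\in\overline D$, and set $U^i_t=X_t\cdot n_i-a_i$. Then for every $i\in\mathbf I$ and every $0<t<\infty$, almost surely $$\int_0^t|\phi_i'(U^i_s)|\,ds<\infty.$$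
   Context: A unit vector $n(x)$ is a unit inward normal to $D$ at $x\in\partial D$ if $n(x)\cdot(x-z)\le0$ for all $z\in\overline D$. The solution of the multivalued SDE associated with $\Phi$ (which exists and is unique) is the pair consisting of a continuous $(\mathcal F_t)$-adapted $\overline D$-valued process $X$ and a continuous $(\mathcal F_t)$-adapted nondecreasing process $L$ such that for all $t\ge0$: $X_t=X_0+B_t-\int_0^t\nabla\Phi(X_s)\,ds+\int_0^t n_s\,dL_s$ and $L_t=\int_0^t\mathbf 1_{\{X_s\in\partial D\}}dL_s$, where $n_s$ is $dL_s$-a.e. a unit inward normal to $D$ at $X_s$; here $\nabla\Phi(x)=\sum_i n_i\phi_i'(x\cdot n_i-a_i)$ on $D$. This solution also satisfies $\int_0^T\mathbf 1_{\{X_s\in\partial D\}}ds=0$ and $\int_0^T|\nabla\Phi(X_s)|ds<\infty$ for all $T<\infty$. *)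

(* Defs.v *)
From HB Require Import structures.
From mathcomp Require Import all_boot all_order all_algebra.
From mathcomp Require Import all_classical all_reals all_analysis.
Set Implicit Arguments. Unset Strict Implicit. Unset Printing Implicit Defensive.
Import Order.TTheory GRing.Theory Num.Theory.
Import numFieldNormedType.Exports.
Local Open Scope classical_set_scope.
Local Open Scope ring_scope.

Section Defs.
Context {R : realType}.

Definition dot {d : nat} (x y : 'rV[R]_d) : R := \sum_(k < d) x 0 k * y 0 k.

Definition econvex (f : R -> \bar R) : Prop :=
  forall x y l : R, 0 < l -> l < 1 ->
    (f (l * x + (1 - l) * y)%R <= l%:E * f x + (1 - l)%:E * f y)%E.

Definition admissible_phi (f : R -> \bar R) : Prop :=
  [/\ econvex f,
      lower_semicontinuous f,
      (forall u, u < 0 -> f u = +oo%E)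
    & exists g : R -> R,
        [/\ (forall u, 0 < u -> f u = (g u)%:E),
            (forall u, 0 < u -> derivable g u 1)
          & {in `]0, +oo[, continuous (derive1 g)}]].

(* phi' : the derivative of phi on (0,+oo); by convention 0 on (-oo,0]
   (these points are irrelevant: the solution spends zero Lebesgue time on the boundary) *)
Definition dphi (f : R -> \bar R) (u : R) : R :=
  if 0 < u then derive1 (fine \o f) u else 0.

Definition Dset {d m : nat} (nv : 'I_m -> 'rV[R]_d) (a : 'I_m -> R) : set 'rV[R]_d :=
  [set x | forall i, a i < dot x (nv i)].
Definition Dbar {d m : nat} (nv : 'I_m -> 'rV[R]_d) (a : 'I_m -> R) : set 'rV[R]_d :=
  [set x | forall i, a i <= dot x (nv i)].
Definition bdry {d m : nat} (nv : 'I_m -> 'rV[R]_d) (a : 'I_m -> R) : set 'rV[R]_d :=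
  Dbar nv a `\` Dset nv a.

Definition inward_normal {d m : nat} (nv : 'I_m -> 'rV[R]_d) (a : 'I_m -> R)
  (x v : 'rV[R]_d) : Prop :=
  dot v v = 1 /\ forall z, Dbar nv a z -> dot v (x - z) <= 0.

Definition gradPhi {d m : nat} (phi : 'I_m -> R -> \bar R) (nv : 'I_m -> 'rV[R]_d)
  (a : 'I_m -> R) (x : 'rV[R]_d) : 'rV[R]_d :=
  \sum_(i < m) dphi (phi i) (dot x (nv i) - a i) *: nv i.

Context {dO : measure_display} {Omega : measurableType dO}.

Definition usual_filtration (P : probability Omega R) (F : R -> set (set Omega)) : Prop :=
  [/\ (forall t, 0 <= t -> sigma_algebra setT (F t)),
      (forall t, 0 <= t -> F t `<=` measurable),
      (forall s t, 0 <= s -> s <= t -> F s `<=` F t),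
      (forall N, (exists N', [/\ measurable N', P N' = 0%E & N `<=` N']) -> F 0 N)
    &
      (forall t, 0 <= t -> \bigcap_(s in `]t, +oo[) F s `<=` F t)].

Definition adapted (F : R -> set (set Omega)) (Y : R -> Omega -> R) : Prop :=
  forall t, 0 <= t -> forall E : set R, measurable E -> F t (Y t @^-1` E).

(* (F_t)-Brownian motion in R^d started at 0: continuous paths, adapted, and for
   s < t the increment B_t - B_s is independent of F_s with law N(0, (t-s) I_d)
   (expressed as the product rule on F_s-events times Borel rectangles). *)
Definition brownian {d : nat} (P : probability Omega R) (F : R -> set (set Omega))
  (B : R -> Omega -> 'rV[R]_d) : Prop :=
  [/\ (forall w, B 0 w = 0),
      (forall w (k : 'I_d), {within `[0, +oo[, continuous (fun t => B t w 0 k)}),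
      (forall k : 'I_d, adapted F (fun t w => B t w 0 k))
    & (forall s t, 0 <= s -> s < t -> forall A, F s A ->
        forall E : 'I_d -> set R, (forall k, measurable (E k)) ->
        P (A `&` [set w | forall k, E k (B t w 0 k - B s w 0 k)]) =
        (P A * \prod_(k < d) normal_prob 0 (Num.sqrt (t - s)) (E k))%E)].

Definition mSDE_solution {d m : nat} (P : probability Omega R) (F : R -> set (set Omega))
  (B : R -> Omega -> 'rV[R]_d) (phi : 'I_m -> R -> \bar R) (nv : 'I_m -> 'rV[R]_d)
  (a : 'I_m -> R) (X : R -> Omega -> 'rV[R]_d) (L : Omega -> cumulative R R) : Prop :=
  [/\ (* X continuous, adapted (so X_0 is F_0-measurable), Dbar-valued *)
      (forall w (k : 'I_d), {within `[0, +oo[, continuous (fun t => X t w 0 k)}),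
      (forall k : 'I_d, adapted F (fun t w => X t w 0 k)),
      (forall t w, 0 <= t -> Dbar nv a (X t w)),
      ((forall w, continuous (L w) /\ forall s, s <= 0 -> L w s = 0) /\
       adapted F (fun t w => L w t))
    & exists n : R -> Omega -> 'rV[R]_d,
        (forall w (k : 'I_d), measurable_fun setT (fun s => n s w 0 k)) /\
        {ae P, forall w, forall t : R, 0 <= t ->
          [/\ (\int[lebesgue_measure]_(s in `[0%R, t])
                  (Num.sqrt (dot (gradPhi phi nv a (X s w)) (gradPhi phi nv a (X s w))))%:E
                < +oo)%E,
              (\int[lebesgue_measure]_(s in `[0%R, t]) (\1_(bdry nv a) (X s w))%:E = 0)%E,
              (forall k : 'I_d,
                X t w 0 k = X 0 w 0 k + B t w 0 k
                  - Rintegral lebesgue_measure `[0%R, t] (fun s => gradPhi phi nv a (X s w) 0 k)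
                  + Rintegral (lebesgue_stieltjes_measure (L w)) `[0%R, t] (fun s => n s w 0 k)),
              L w t = Rintegral (lebesgue_stieltjes_measure (L w)) `[0%R, t]
                        (fun s => \1_(bdry nv a) (X s w))
            & {ae lebesgue_stieltjes_measure (L w), forall s, 0 <= s ->
                 inward_normal nv a (X s w) (n s w)}]}].

End Defs.

(* Main.v *)
Require Import Defs.
From HB Require Import structures.
From mathcomp Require Import all_boot all_order all_algebra.
From mathcomp Require Import all_classical all_reals all_analysis.
From mathcomp Require Import ring lra measurable_realfun.
Import Order.TTheory GRing.Theory Num.Theory.
Import numFieldNormedType.Exports.
Local Open Scope classical_set_scope.
Local Open Scope ring_scope.

Section tangent.
Context {R : realType}.

Lemma derive_right (g : R -> R) u : derivable g u 1 ->
  (fun h => h^-1 * (g (h + u) - g u)) @ 0^'+ --> derive1 g u.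
Proof.
move=> dg.
have E : (fun h : R => h^-1 * (g (h + u) - g u)) =
   (fun h => h^-1 *: ((g \o shift u) (h *: 1) - g u)).
  by apply/funext => h /=; rewrite /GRing.scale /= mulr1.
have cv : cvg ((fun h : R => h^-1 * (g (h + u) - g u)) @ 0^') by rewrite E.
rewrite /derive1.
move: cv; set f := (fun h : R => _) => cvfx.
apply: (cvg_trans _ cvfx) => A /[dup] HA /nbhs_ballP [_ /posnumP[e] xe_A].
exists e%:num => //= y xe_y; rewrite lt_def => /andP [xney _]; apply: xe_A => //.
Qed.
Lemma derive_left (g : R -> R) u : derivable g u 1 ->
  (fun h => h^-1 * (g (h + u) - g u)) @ 0^'- --> derive1 g u.
Proof.
move=> dg.
have E : (fun h : R => h^-1 * (g (h + u) - g u)) =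
   (fun h => h^-1 *: ((g \o shift u) (h *: 1) - g u)).
  by apply/funext => h /=; rewrite /GRing.scale /= mulr1.
have cv : cvg ((fun h : R => h^-1 * (g (h + u) - g u)) @ 0^') by rewrite E.
rewrite /derive1.
move: cv; set f := (fun h : R => _) => cvfx.
apply: (cvg_trans _ cvfx) => A /[dup] HA /nbhs_ballP [_ /posnumP[e] xe_A].
exists e%:num => //= y xe_y; rewrite lt_def => /andP [xney _]; apply: xe_A => //.
by rewrite eq_sym.
Qed.

Definition convex_pos (g : R -> R) := forall x y l, 0 < x -> 0 < y -> 0 < l -> l < 1 ->
  g (l * x + (1 - l) * y) <= l * g x + (1 - l) * g y.

Lemma tangent (g : R -> R) u z : convex_pos g -> 0 < u -> 0 < z ->
  derivable g u 1 -> derive1 g u * (z - u) <= g z - g u.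
Proof.
move=> cg u0 z0 dg.
have [zu|zu|<-] := ltgtP z u; last by rewrite !subrr mulr0.
-
  have H : (g z - g u) / (z - u) <= derive1 g u.
    have := cvgr_to_ge (derive_left g u dg); apply.
    near=> h.
    have hneg : h < 0 by near: h; exact: nbhs_left_lt.
    have hgt : z - u < h.
      near: h; apply: nbhs_left_gt; by rewrite subr_lt0.
    pose l := (- h) / (u - z).
    have uz0 : 0 < u - z by rewrite subr_gt0.
    have l0 : 0 < l by rewrite /l divr_gt0 // oppr_gt0.
    have l1 : l < 1 by rewrite /l ltr_pdivrMr // mul1r; lra.
    have eq : h + u = l * z + (1 - l) * u.
      rewrite /l; field; lra.
    have := cg z u l z0 u0 l0 l1; rewrite -eq => hc.
    have hc2 : g (h + u) - g u <= l * (g z - g u) by lra.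
    have : h^-1 * (l * (g z - g u)) <= h^-1 * (g (h + u) - g u).
      by rewrite ler_wnM2l // invr_le0 ltW.
    suff -> : h^-1 * (l * (g z - g u)) = (g z - g u) / (z - u) by [].
    rewrite /l; field; by rewrite !subr_eq0 (lt_eqF zu) (gt_eqF zu) (ltr0_neq0 hneg).
  have zu0 : z - u <= 0 by rewrite subr_le0 ltW.
  have := ler_wnM2r zu0 H; rewrite divfK //.
  by rewrite subr_eq0 lt_eqF.
-
  have H : derive1 g u <= (g z - g u) / (z - u).
    have := cvgr_to_le (derive_right g u dg); apply.
    near=> h.
    have hpos : 0 < h by near: h; exact: nbhs_right_gt.
    have hlt : h < z - u.
      near: h; apply: nbhs_right_lt; by rewrite subr_gt0.
    pose l := h / (z - u).
    have zu0 : 0 < z - u by rewrite subr_gt0.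
    have l0 : 0 < l by rewrite /l divr_gt0.
    have l1 : l < 1 by rewrite /l ltr_pdivrMr // mul1r.
    have eq : h + u = l * z + (1 - l) * u.
      rewrite /l; field; lra.
    have := cg z u l z0 u0 l0 l1; rewrite -eq => hc.
    have hc2 : g (h + u) - g u <= l * (g z - g u) by lra.
    have : h^-1 * (g (h + u) - g u) <= h^-1 * (l * (g z - g u)).
      by rewrite ler_wpM2l // invr_ge0 ltW.
    suff -> : h^-1 * (l * (g z - g u)) = (g z - g u) / (z - u) by [].
    rewrite /l; field; by rewrite (gt_eqF zu0) (gt_eqF hpos).
  have zu1 : 0 <= z - u by rewrite subr_ge0 ltW.
  have := ler_wpM2r zu1 H; rewrite divfK //.
  by rewrite subr_eq0 gt_eqF.
Unshelve. all: by end_near.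
Qed.


Lemma adm_g (f : R -> \bar R) : admissible_phi f ->
  exists g : R -> R, [/\ (forall u, 0 < u -> f u = (g u)%:E),
     (forall u, 0 < u -> derivable g u 1), {in `]0, +oo[, continuous (derive1 g)},
     convex_pos g & (forall u, 0 < u -> dphi f u = derive1 g u)].
Proof.
case=> cf _ _ [g [fg dg cg]]; exists g; split => //.
- move=> x y l x0 y0 l0 l1.
  have p0 : 0 < l * x + (1 - l) * y.
    by rewrite addr_gt0 // mulr_gt0 // subr_gt0.
  have := cf x y l l0 l1; rewrite !fg // -!EFinM -EFinD lee_fin; exact.
- move=> u u0; rewrite /dphi u0 !derive1E; apply: near_eq_derive.
  near=> x; rewrite /= fg //; near: x; exact: lt_nbhsr.
Unshelve. all: by end_near.
Qed.

Lemma dphi_le0 (f : R -> \bar R) u : u <= 0 -> dphi f u = 0.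
Proof. by rewrite /dphi => /(le_gtF) ->. Qed.

Lemma dphi_mono (f : R -> \bar R) x y : admissible_phi f -> 0 < x -> x <= y ->
  dphi f x <= dphi f y.
Proof.
move=> /adm_g [g [fg dg cg cvx dE]] x0 xy.
have y0 : 0 < y by apply: lt_le_trans xy.
rewrite !dE //.
have [->|xy'] := eqVneq x y; first by [].
have lt : x < y by rewrite lt_neqAle xy' xy.
have t1 := tangent g x y cvx x0 y0 (dg _ x0).
have t2 := tangent g y x cvx y0 x0 (dg _ y0).
have p : 0 < y - x by rewrite subr_gt0.
have : derive1 g x * (y - x) <= derive1 g y * (y - x) by lra.
by rewrite ler_pM2r.
Qed.

Lemma dphi_meas (f : R -> \bar R) : admissible_phi f -> measurable_fun setT (dphi f).
Proof.
move=> /adm_g [g [fg dg cg cvx dE]].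
have m1 : measurable_fun (`]0, +oo[ : set R) (derive1 g).
  apply: open_continuous_measurable_fun => //.
  move=> u; rewrite inE /=. exact: cg.
have m2 := (measurable_restrictT _ (measurable_itv `]0, +oo[)).1 m1.
apply: (eq_measurable_fun _ _ m2) => u _.
rewrite patchE /dphi mem_setE in_itv /= andbT.
by case: ifPn => // u0; rewrite -dE // /dphi ?u0.
Qed.

Lemma term_bound (f : R -> \bar R) c U u : admissible_phi f -> 0 < c -> 0 <= U ->
  0 <= u -> u <= U ->
  `|dphi f u| * (c / 2) - (`|dphi f (c / 2)| + `|dphi f (U + c)|) * (U + 2 * c)
    <= dphi f u * (u - c).
Proof.
move=> af c0 U0 u0 uU.
set h := dphi f.
have Q0 : 0 <= `|h (c / 2)| + `|h (U + c)| by rewrite addr_ge0.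
set Q := `|h (c / 2)| + `|h (U + c)| in Q0 *.
have [u0'|upos] := leP u 0.
  rewrite /h dphi_le0 // normr0 mul0r mul0r sub0r oppr_le0.
  by rewrite mulr_ge0 //; lra.
have [uc|uc] := leP u (c / 2).
- have hle : h u <= h (c / 2) by apply: dphi_mono.
  have [hneg|hpos] := leP (h u) 0.
  + rewrite ler0_norm //.
    have : 0 <= Q * (U + 2 * c) by rewrite mulr_ge0 //; lra.
    nra.
  + rewrite gtr0_norm //.
    have hQ : h u <= Q.
      apply: (le_trans hle); rewrite /Q; apply: (le_trans (ler_norm _)); rewrite lerDl //.
    nra.
- have hle : h (c / 2) <= h u by apply: dphi_mono => //; [lra | exact: ltW].
  have hle2 : h u <= h (U + c) by apply: dphi_mono => //; lra.
  have hQ : `|h u| <= Q.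
    rewrite /Q; case: (lerP 0 (h u)) => hs.
    * rewrite ger0_norm //; apply: (le_trans hle2); apply: (le_trans (ler_norm _)).
      by rewrite lerDr.
    * rewrite ltr0_norm //.
      have : - h (c / 2) <= `|h (c / 2)| by rewrite -normrN ler_norm.
      have : 0 <= `|h (U + c)| by [].
      lra.
  have hn : - `|h u| <= h u by rewrite lerNnormlW.
  have hn2 : h u <= `|h u| by rewrite ler_norm.
  have n0 : 0 <= `|h u| by [].
  nra.
Qed.

Lemma dotC d (x y : 'rV[R]_d) : dot x y = dot y x.
Proof. by rewrite /dot; apply: eq_bigr => k _; rewrite mulrC. Qed.

Lemma dotBl d (x y z : 'rV[R]_d) : dot (x - y) z = dot x z - dot y z.
Proof.
rewrite /dot -sumrB; apply: eq_bigr => k _; by rewrite !mxE mulrBl.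
Qed.

Lemma dot_sumZ d m (x : 'rV[R]_d) (c : 'I_m -> R) (v : 'I_m -> 'rV[R]_d) :
  dot x (\sum_(j < m) c j *: v j) = \sum_(j < m) c j * dot x (v j).
Proof.
rewrite /dot.
under eq_bigr => k _ do rewrite summxE mulr_sumr.
rewrite exchange_big /=; apply: eq_bigr => j _.
rewrite mulr_sumr; apply: eq_bigr => k _; rewrite mxE; lra.
Qed.

Lemma dot_ge0 d (x : 'rV[R]_d) : 0 <= dot x x.
Proof. by rewrite /dot sumr_ge0 // => k _; rewrite -expr2 sqr_ge0. Qed.

Lemma coord_le d (x : 'rV[R]_d) k : `|x 0 k| <= Num.sqrt (dot x x).
Proof.
rewrite -sqrtr_sqr ler_sqrt; last exact: dot_ge0.
rewrite /dot (bigD1 k) //= -expr2 lerDl sumr_ge0 // => l _.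
by rewrite -expr2 sqr_ge0.
Qed.

Lemma dot_bound d (v G : 'rV[R]_d) :
  `|dot v G| <= (\sum_k `|v 0 k|) * Num.sqrt (dot G G).
Proof.
rewrite /dot mulr_suml; apply: (le_trans (ler_norm_sum _ _ _)).
apply: ler_sum => k _; rewrite normrM ler_wpM2l //; exact: coord_le.
Qed.

Lemma key d m (phi : 'I_m -> R -> \bar R) (nv : 'I_m -> 'rV[R]_d) (a : 'I_m -> R)
  (y0 : 'rV[R]_d) (i : 'I_m) (Mb : R) :
  (forall j, admissible_phi (phi j)) -> Dset nv a y0 -> 0 <= Mb ->
  exists K1 K2 : R, [/\ 0 <= K1, 0 <= K2 & forall x, Dbar nv a x ->
    (forall k, `|x 0 k| <= Mb) ->
    `|dphi (phi i) (dot x (nv i) - a i)| <=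
      K1 + K2 * Num.sqrt (dot (gradPhi phi nv a x) (gradPhi phi nv a x))].
Proof.
move=> adm Dy0 Mb0.
pose c j := dot y0 (nv j) - a j.
have c0 j : 0 < c j by rewrite /c subr_gt0; exact: Dy0.
pose U j := \sum_(k < d) Mb * `|nv j 0 k| + `|a j|.
have U0 j : 0 <= U j by rewrite /U addr_ge0 // sumr_ge0 // => k _; rewrite mulr_ge0.
pose B j := (`|dphi (phi j) (c j / 2)| + `|dphi (phi j) (U j + c j)|) * (U j + 2 * c j).
have B0 j : 0 <= B j.
  by rewrite /B; apply: mulr_ge0; [rewrite addr_ge0 | have := c0 j; have := U0 j; lra].
pose Ky := \sum_(k < d) (`|y0 0 k| + Mb).
have Ky0 : 0 <= Ky by rewrite sumr_ge0 // => k _; rewrite addr_ge0.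
have ci0 := c0 i.
exists ((\sum_j B j) * (2 / c i)), (Ky * (2 / c i)); split.
- by rewrite mulr_ge0 ?sumr_ge0 // divr_ge0 // ltW.
- by rewrite mulr_ge0 // divr_ge0 // ltW.
move=> x Dx xM.
set G := gradPhi phi nv a x.
set Ng := Num.sqrt (dot G G).
pose u j := dot x (nv j) - a j.
pose h j := dphi (phi j) (u j).
have u0 j : 0 <= u j by rewrite /u subr_ge0; exact: Dx.
have uU j : u j <= U j.
  rewrite /u /U lerD //; last by have := ler_norm (- a j); rewrite normrN.
  rewrite /dot; apply: (le_trans (ler_norm _)).
  apply: (le_trans (ler_norm_sum _ _ _)); apply: ler_sum => k _.
  by rewrite normrM ler_wpM2r.
have T j : `|h j| * (c j / 2) - B j <= h j * (u j - c j).
  exact: term_bound.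
have sumT : \sum_j (`|h j| * (c j / 2) - B j) <= \sum_j h j * (u j - c j).
  exact: ler_sum.
have eqS : \sum_j h j * (u j - c j) = dot (x - y0) G.
  rewrite /G /gradPhi dot_sumZ; apply: eq_bigr => j _.
  by rewrite /h /u /c dotBl; congr (_ * _); lra.
have bnd : dot (x - y0) G <= Ky * Ng.
  apply: (le_trans (ler_norm _)); apply: (le_trans (dot_bound _ _ _)).
  rewrite ler_wpM2r ?sqrtr_ge0 //; apply: ler_sum => k _.
  rewrite !mxE; apply: (le_trans (ler_normB _ _)); rewrite addrC lerD //.
have hi : `|h i| * (c i / 2) <= \sum_j `|h j| * (c j / 2).
  rewrite (bigD1 i) //= lerDl sumr_ge0 // => j _.
  by rewrite mulr_ge0 // divr_ge0 // ltW.
rewrite sumrB in sumT.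
have : `|h i| * (c i / 2) <= \sum_j B j + Ky * Ng by lra.
rewrite -/(h i) -/(u i) -/G -/Ng.
move=> H.
have -> : `|h i| = (`|h i| * (c i / 2)) * (2 / c i).
  by field; rewrite gt_eqF.
have -> : (\sum_j B j) * (2 / c i) + Ky * (2 / c i) * Ng = (\sum_j B j + Ky * Ng) * (2 / c i) by ring.
rewrite ler_wpM2r //.
by rewrite divr_ge0 // ltW.
Qed.
End tangent.

Lemma meas_X (R : realType) (f : R -> R) (t : R) :
  {within `[0, +oo[, continuous f} -> measurable_fun (`[0, t] : set R) f.
Proof.
move=> cf; apply: subspace_continuous_measurable_fun => //.
apply: continuous_subspaceW cf => s /=; rewrite !in_itv /= => /andP[-> _] //.
Qed.

Theorem lemma2 (R : realType) (d m : nat) (dO : measure_display)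
  (Omega : measurableType dO) (P : probability Omega R) (F : R -> set (set Omega))
  (B : R -> Omega -> 'rV[R]_d) (phi : 'I_m -> R -> \bar R) (nv : 'I_m -> 'rV[R]_d)
  (a : 'I_m -> R) (X : R -> Omega -> 'rV[R]_d) (L : Omega -> cumulative R R) :
  (0 < m)%N ->
  usual_filtration P F ->
  brownian P F B ->
  (forall i, admissible_phi (phi i)) ->
  injective nv ->
  (forall i, dot (nv i) (nv i) = 1) ->
  Dset nv a !=set0 ->
  mSDE_solution P F B phi nv a X L ->
  forall (i : 'I_m) (t : R), 0 < t ->
    {ae P, forall w, (\int[lebesgue_measure]_(s in `[0%R, t])
                        (`|dphi (phi i) (dot (X s w) (nv i) - a i)|)%:E < +oo)%E}.
Proof.
move=> m0 _ _ adm _ _ [y0 Dy0] [Xc _ XD _ [n [_ Hae]]] i t t0.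
apply: filterS Hae => w Hw.
have [Hint _ _ _ _] := Hw t (ltW t0).
have bk : forall k : 'I_d, exists M : R, 0 <= M /\
    forall s, s \in `[0, t] -> `|X s w 0 k| <= M.
  move=> k.
  have cw : {within `[0, t], continuous (fun s => X s w 0 k)}.
    apply: continuous_subspaceW (Xc w k) => s /=; rewrite !in_itv /= => /andP[-> _] //.
  have [c1 _ H1] := EVT_max (ltW t0) cw.
  have [c2 _ H2] := EVT_min (ltW t0) cw.
  exists (`|X c1 w 0 k| + `|X c2 w 0 k|); split; first by rewrite addr_ge0.
  move=> s hs; have := H1 s hs; have := H2 s hs.
  have := ler_norm (X c1 w 0 k); have := ler_norm (- X c2 w 0 k); rewrite normrN.
  have := normr_ge0 (X c1 w 0 k); have := normr_ge0 (X c2 w 0 k).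
  move=> a5 a6 a1 a2 a3 a4; rewrite ler_norml; apply/andP; split; lra.
case: (choice bk) => Mf HM.
pose Mb := \sum_k Mf k.
have Mb0 : 0 <= Mb by rewrite sumr_ge0 // => k _; case: (HM k).
have HMb : forall s, s \in `[0, t] -> forall k, `|X s w 0 k| <= Mb.
  move=> s hs k; case: (HM k) => _ /(_ s hs) H; apply: (le_trans H).
  rewrite /Mb (bigD1 k) //= lerDl sumr_ge0 // => l _; by case: (HM l).
have [K1 [K2 [K10 K20 HK]]] := key _ _ _ _ _ _ i _ adm Dy0 Mb0.
have mI : measurable (`[0, t] : set R) by exact: measurable_itv.
have mX k : measurable_fun (`[0, t] : set R) (fun s => X s w 0 k).
  exact: meas_X (Xc w k).
have mu j : measurable_fun (`[0, t] : set R) (fun s => dot (X s w) (nv j) - a j).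
  rewrite /dot; apply: measurable_funB; last exact: measurable_cst.
  apply: measurable_sum => k; apply: measurable_funM => //; exact: measurable_cst.
have mh j : measurable_fun (`[0, t] : set R)
    (fun s => dphi (phi j) (dot (X s w) (nv j) - a j)).
  exact: (measurableT_comp (dphi_meas _ (adm j)) (mu j)).
have mG k : measurable_fun (`[0, t] : set R) (fun s => gradPhi phi nv a (X s w) 0 k).
  apply: (eq_measurable_fun (fun s => \sum_(j < m)
     dphi (phi j) (dot (X s w) (nv j) - a j) * nv j 0 k)).
    by move=> s _; rewrite /gradPhi summxE; apply: eq_bigr => j _; rewrite mxE.
  apply: measurable_sum => j; apply: measurable_funM => //; exact: measurable_cst.
have mN : measurable_fun (`[0, t] : set R)
    (fun s => Num.sqrt (dot (gradPhi phi nv a (X s w)) (gradPhi phi nv a (X s w)))).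
  apply: (measurableT_comp (continuous_measurable_fun (@sqrt_continuous R))).
  rewrite /dot; apply: measurable_sum => k; exact: measurable_funM.
set Ng := fun s => Num.sqrt (dot (gradPhi phi nv a (X s w)) (gradPhi phi nv a (X s w))).
have Ng0 s : 0 <= Ng s by rewrite /Ng sqrtr_ge0.
have mNE : measurable_fun (`[0, t] : set R) (fun s => (Ng s)%:E).
  exact/measurable_EFinP.
apply: (@le_lt_trans _ _ (\int[lebesgue_measure]_(s in `[0%R, t])
           (K1%:E + K2%:E * (Ng s)%:E))%E).
  apply: ge0_le_integral => //.
  - apply/measurable_EFinP; apply: (measurableT_comp (@normr_measurable R setT)).
    exact: mh.
  - apply: emeasurable_funD; first exact: measurable_cst.
    apply: emeasurable_funM => //; exact: measurable_cst.
  - move=> s hs; rewrite -EFinM -EFinD lee_fin; apply: HK.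
    + by apply: XD; move: hs; rewrite /= in_itv /= => /andP[].
    + by apply: HMb; rewrite inE.
rewrite ge0_integralD //.
- rewrite integral_cst // ge0_integralZl_EFin //.
  + have lt : (lebesgue_measure (`[0%R, t] : set R) < +oo)%E.
      by rewrite lebesgue_measure_itv /= lte_fin t0 -EFinD ltry.
    apply: lte_add_pinfty.
      by apply: lte_mul_pinfty => //; rewrite lee_fin.
    apply: lte_mul_pinfty => //.
  + by move=> s _; rewrite lee_fin.
- by move=> s _; rewrite mule_ge0 // lee_fin.
- apply: emeasurable_funM => //; exact: measurable_cst.
Qed.
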